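(* Let $X$ be a binary random variable taking values in $\{x_1,x_2\}\subset\mathbb{R}$ with $\mathbb{E}[X]=0$, let $U$ be a random variable on a finite alphabet $\mathcal{U}$ jointly distributed with $X$, and let $\epsilon\ge0$ be such that $\|P_{X|U=u}-P_X\|_1\le\epsilon$ for all $u\in\mathcal{U}$. Then $\mathrm{MMSE}(X|U)\ge\mathrm{Var}(X)-\frac14\epsilon^2(x_1-x_2)^2$. Furthermore, $\mathrm{Var}(X)\le\frac14(x_1-x_2)^2$, and if $x_1=-x_2$ then $\mathrm{Var}(X)=\frac14(x_1-x_2)^2$.
   Context: $\mathrm{MMSE}(X|U)=\sum_u P_U(u)\left(\mathbb{E}(X^2|U=u)-(\mathbb{E}(X|U=u))^2\right)$. $\|\cdot\|_1$ is the $\ell_1$ norm. *)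

(* Defs.v *)
From mathcomp Require Import all_boot all_order all_algebra.
Set Implicit Arguments. Unset Strict Implicit. Unset Printing Implicit Defensive.
Import Order.TTheory GRing.Theory Num.Theory.
Local Open Scope ring_scope.

(* The joint pmf is p : U -> bool -> R, p u b = P(U = u, X = xval x1 x2 b);
   label true <-> value x1, label false <-> value x2. *)
Section Defs.
Variables (R : realFieldType) (U : finType).
Variables (p : U -> bool -> R) (x1 x2 : R).

Definition xval (b : bool) : R := if b then x1 else x2.

Definition PU (u : U) : R := \sum_(b : bool) p u b.
Definition PX (b : bool) : R := \sum_(u : U) p u b.

Definition EX : R := \sum_(u : U) \sum_(b : bool) p u b * xval b.
Definition EX2 : R := \sum_(u : U) \sum_(b : bool) p u b * xval b ^+ 2.
Definition VarX : R := EX2 - EX ^+ 2.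

(* conditional quantities given U = u (meaningful when PU u > 0) *)
Definition condPX (u : U) (b : bool) : R := p u b / PU u.
Definition condE (u : U) : R := \sum_(b : bool) condPX u b * xval b.
Definition condE2 (u : U) : R := \sum_(b : bool) condPX u b * xval b ^+ 2.

Definition MMSE : R := \sum_(u : U) PU u * (condE2 u - condE u ^+ 2).

Definition l1dist (u : U) : R := \sum_(b : bool) `|condPX u b - PX b|.
End Defs.

(* Main.v *)
Require Import Defs.
From mathcomp Require Import all_boot all_order all_algebra.
Import Order.TTheory GRing.Theory Num.Theory.
Local Open Scope ring_scope.
From mathcomp Require Import ring lra.

Lemma key (R : realFieldType) (a b q x1 x2 eps : R) :
  0 <= a -> 0 <= b -> 0 <= eps ->
  (0 < a + b -> `|a / (a + b) - q| + `|b / (a + b) - (1 - q)| <= eps) ->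
  (a + b) * (q * (1 - q) * (x1 - x2) ^+ 2 - eps ^+ 2 * (x1 - x2) ^+ 2 / 4)
   + (a - (a + b) * q) * ((1 - 2 * q) * (x1 - x2) ^+ 2)
  <= (a + b) * ((a / (a + b) * x1 ^+ 2 + b / (a + b) * x2 ^+ 2)
                - (a / (a + b) * x1 + b / (a + b) * x2) ^+ 2).
Proof.
move=> ha hb he hl.
have [s0|spos] := eqVneq (a + b) 0.
  have a0 : a = 0 by lra.
  by rewrite s0 a0 !mul0r subrr !mul0r addr0.
have sp : 0 < a + b by rewrite lt_def spos; lra.
set s := a + b in sp spos hl *.
set r := a / s.
have hb' : b / s = 1 - r.
  by rewrite /r -[1](divff spos) -mulrBl; congr (_ / _); rewrite /s; ring.
have ha' : a = r * s by rewrite /r divfK.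
have := hl sp; rewrite hb' -/r.
have -> : 1 - r - (1 - q) = - (r - q) by ring.
rewrite normrN => h.
have hrq : (r - q) ^+ 2 <= eps ^+ 2 / 4.
  have h1 : `|r - q| <= eps / 2 by lra.
  have h0 : 0 <= `|r - q| by [].
  rewrite -real_normK ?num_real //; nra.
rewrite [in a - _]ha'.
set D := (x1 - x2) ^+ 2.
have hD : 0 <= D by rewrite /D sqr_ge0.
have h2 : 0 <= eps ^+ 2 / 4 - (r - q) ^+ 2 by rewrite subr_ge0.
have := mulr_ge0 (mulr_ge0 (ltW sp) hD) h2.
rewrite /D; nra.
Qed.

Theorem proposition9 (R : realFieldType) (U : finType) (p : U -> bool -> R)
  (x1 x2 eps : R) :
  (forall u b, 0 <= p u b) ->
  \sum_(u : U) \sum_(b : bool) p u b = 1 ->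
  EX p x1 x2 = 0 ->
  0 <= eps ->
  (forall u, 0 < PU p u -> l1dist p u <= eps) ->
  [/\ VarX p x1 x2 - eps ^+ 2 * (x1 - x2) ^+ 2 / 4 <= MMSE p x1 x2,
      VarX p x1 x2 <= (x1 - x2) ^+ 2 / 4 &
      (x1 = - x2 -> VarX p x1 x2 = (x1 - x2) ^+ 2 / 4)].
Proof.
move=> hp hs hE he hl.
set q := PX p true.
have hs' : q + PX p false = 1.
  rewrite -hs /q /PX -big_split /=; apply: eq_bigr => u _; by rewrite big_bool.
have hf : PX p false = 1 - q by lra.
have hEX : EX p x1 x2 = q * x1 + (1 - q) * x2.
  rewrite /EX -hf /q /PX !mulr_suml -big_split /=; apply: eq_bigr => u _.
  by rewrite big_bool.
have hEX2 : EX2 p x1 x2 = q * x1 ^+ 2 + (1 - q) * x2 ^+ 2.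
  rewrite /EX2 -hf /q /PX !mulr_suml -big_split /=; apply: eq_bigr => u _.
  by rewrite big_bool.
have hV : VarX p x1 x2 = q * (1 - q) * (x1 - x2) ^+ 2.
  rewrite /VarX hEX2 hEX /=; ring.
split.
- rewrite hV.
  set K := q * (1 - q) * (x1 - x2) ^+ 2 - eps ^+ 2 * (x1 - x2) ^+ 2 / 4.
  set L := (1 - 2 * q) * (x1 - x2) ^+ 2.
  have -> : K = \sum_(u : U) ((p u true + p u false) * K
                 + (p u true - (p u true + p u false) * q) * L).
    rewrite big_split /= -!mulr_suml sumrB -mulr_suml.
    have -> : \sum_(u : U) (p u true + p u false) = 1.
      by rewrite -hs; apply: eq_bigr => u _; rewrite big_bool.
    rewrite -/(PX p true) -/q; ring.
  rewrite /MMSE; apply: ler_sum => u _.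
  have hPU : PU p u = p u true + p u false by rewrite /PU big_bool.
  rewrite /condE2 /condE !big_bool /condPX /= hPU.
  apply: key => //.
  move=> hpos; have := hl u (ltac:(by rewrite hPU)).
  by rewrite /l1dist big_bool /condPX hPU hf.
- rewrite hV; have := sqr_ge0 (x1 - x2); have := sqr_ge0 (q - 1/2); nra.
- move=> hx; move: hE; rewrite hEX hV hx => hE.
  have h0 : (2 * q - 1) * x2 = 0 by lra.
  have : ((2 * q - 1) * x2) ^+ 2 = 0 by rewrite h0 expr0n.
  nra.
Qed.
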